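(* Let $G$ be a connected graph and $\sigma$ a BFS ordering of $G$. If the $\mathcal{F}$-tree $T$ of $\sigma$ has at most $k$ leaves, then the bandwidth of $\sigma$ is at most $k$.
   Context: All graphs are finite, simple, undirected, connected and non-empty. A BFS ordering is an ordering of $V(G)$ produced by breadth-first search: pick a start vertex, mark it visited and put it in a queue; repeatedly remove the front vertex $v$ of the queue and append all not yet visited neighbors of $v$ (in some order) to the queue, marking them visited; the ordering is the order in which vertices are visited. The $\mathcal{F}$-tree of an ordering $\sigma=(v_1,\dots,v_n)$ (where each $v_i$, $i>1$, has an earlier neighbor) is the spanning tree rooted at $v_1$ in which the parent of each $v_i$, $i>1$, is its neighbor appearing leftmost in $\sigma$. A leaf is a non-root vertex of the tree without children (the root is never a leaf). The bandwidth of $\sigma=(v_1,\dots,v_n)$ is $\max_{v_iv_j\in E(G)}|i-j|$. *)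

(* Defs.v *)
From mathcomp Require Import all_boot all_order.
Set Implicit Arguments. Unset Strict Implicit. Unset Printing Implicit Defensive.

Section Graphs.
Variable T : finType.

Definition simple_graph (e : rel T) : Prop :=
  symmetric e /\ irreflexive e.

Definition connected_graph (e : rel T) : Prop :=
  forall x y : T, connect e x y.

(* Execution of BFS.  [bfs_run e ord q fin]: with current visiting order
   [ord] (list of visited vertices, in order of visiting) and queue [q],
   the search terminates with final ordering [fin]. *)
Inductive bfs_run (e : rel T) : seq T -> seq T -> seq T -> Prop :=
| bfs_done ord : bfs_run e ord [::] ord
| bfs_step ord v q new fin :
    perm_eq new [seq x <- enum T | e v x & x \notin ord] ->
    bfs_run e (ord ++ new) (q ++ new) fin ->
    bfs_run e ord (v :: q) fin.

Definition bfs_ordering (e : rel T) (s : seq T) : Prop :=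
  exists r : T, bfs_run e [:: r] [:: r] s.

(* F-tree of an ordering s: rooted at the first vertex of s; the parent
   of a non-root vertex v is its neighbor appearing leftmost in s. *)
Definition ftree_root (s : seq T) (v0 : T) : T := head v0 s.

Definition ftree_parent (e : rel T) (s : seq T) (v : T) : T :=
  nth v s (find (e v) s).

Definition ftree_leaves (e : rel T) (s : seq T) : {set T} :=
  [set v in s | (v != head v s) &&
     ~~ [exists u in s, (u != head u s) && (ftree_parent e s u == v)]].

Definition bandwidth (e : rel T) (s : seq T) : nat :=
  \max_(p : T * T | e p.1 p.2)
     maxn (index p.1 s - index p.2 s) (index p.2 s - index p.1 s).

End Graphs.

(* Main.v *)
Require Import Defs.
From mathcomp Require Import all_boot all_order.
From mathcomp Require Import zify.
Set Implicit Arguments. Unset Strict Implicit. Unset Printing Implicit Defensive.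

Section Inv.
Variable T : finType.
Variable e : rel T.
Hypothesis esym : symmetric e.

Definition inv (ord q : seq T) : Prop :=
  exists P, [/\ ord = P ++ q, uniq ord, 0 < size ord &
   [/\
   (forall x y, x \in P -> e x y -> y \in ord),
   (forall x, x \in ord -> 0 < index x ord -> find (e x) ord < index x ord),
   (forall x y, x \in ord -> y \in ord -> 0 < index x ord ->
       index x ord <= index y ord -> find (e x) ord <= find (e y) ord) &
   (forall x, x \in q -> 0 < index x ord -> find (e x) ord < size P)]].

Lemma inv_step ord v q new :
  perm_eq new [seq x <- enum T | e v x & x \notin ord] ->
  inv ord (v :: q) -> inv (ord ++ new) (q ++ new).
Proof.
move=> Hnew [P [Hord Hu Hsz [Hcl Hpar Hmon Hq]]].
have memnew x : (x \in new) = (e v x && (x \notin ord)).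
  by rewrite (perm_mem Hnew) mem_filter mem_enum andbT.
have unew : uniq new by rewrite (perm_uniq Hnew) filter_uniq // enum_uniq.
have vord : v \in ord by rewrite Hord mem_cat inE eqxx orbT.
have Hu' : uniq (ord ++ new).
  rewrite cat_uniq Hu unew /= andbT; apply/hasPn => x; rewrite memnew.
  by case/andP.
have sizeP : size P < size ord by rewrite Hord size_cat /=; lia.
have findnew x : x \in new -> find (e x) ord = size P.
  rewrite memnew => /andP [evx xn].
  have hP : has (e x) P = false.
    apply/negbTE/hasPn => p pP; apply/negP => exp.
    by move: (Hcl p x pP); rewrite esym exp => /(_ isT); rewrite (negbTE xn).
  by rewrite Hord find_cat hP /= esym evx addn0.
have oldfind x : x \in ord -> 0 < index x ord -> find (e x) (ord ++ new) = find (e x) ord.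
  move=> xo xi; rewrite find_cat.
  have -> : has (e x) ord by rewrite has_find; move: (Hpar x xo xi) (index_mem x ord); rewrite xo; move=> h1 h2; exact: ltn_trans h1 h2.
  by [].
have newfind x : x \in new -> find (e x) (ord ++ new) = size P.
  move=> xn; rewrite find_cat.
  have -> : has (e x) ord by rewrite has_find findnew.
  exact: findnew.
have newnotold x : x \in new -> x \notin ord by rewrite memnew => /andP [].
have idxnew x : x \in new -> size ord <= index x (ord ++ new).
  by move=> xn; rewrite index_cat (negbTE (newnotold x xn)); lia.
have idxold x : x \in ord -> index x (ord ++ new) = index x ord.
  by move=> xo; rewrite index_cat xo.
have oldle x : x \in ord -> 0 < index x ord -> find (e x) ord <= size P.
  move=> xo xi; have := xo; rewrite {1}Hord mem_cat => /orP [xP|xq].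
  - have : index x ord < size P by rewrite Hord index_cat xP index_mem.
    move: (Hpar x xo xi); lia.
  - by move: (Hq x xq xi); lia.
exists (rcons P v); split; [| | |split].
- by rewrite Hord cat_rcons -catA.
- exact: Hu'.
- by rewrite size_cat; lia.
- move=> x y; rewrite mem_rcons inE => /orP [/eqP -> | xP] exy.
  + rewrite mem_cat; case yo: (y \in ord) => //=; by rewrite memnew exy yo.
  + by rewrite mem_cat (Hcl x y xP exy).
- move=> x; rewrite mem_cat => /orP [xo|xn] xi.
  + rewrite idxold // in xi *; rewrite oldfind //; exact: Hpar.
  + rewrite newfind //; move: (idxnew x xn); lia.
- move=> x y; rewrite !mem_cat => /orP [xo|xn] /orP [yo|yn] xi.
  + rewrite (idxold x xo) (idxold y yo) in xi * => xy; rewrite (oldfind x xo xi) (oldfind y yo); first exact: Hmon.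
    lia.
  + rewrite (idxold x xo) in xi *; rewrite (oldfind x xo xi) newfind // => _; exact: oldle.
  + rewrite (idxold y yo) => h; move: (idxnew x xn) (index_mem y ord); rewrite yo; lia.
  + by rewrite !newfind.
- move=> x; rewrite mem_cat size_rcons => /orP [xq|xn] xi.
  + have xo : x \in ord by rewrite Hord mem_cat inE xq !orbT.
    rewrite idxold // in xi; rewrite oldfind //; move: (Hq x); rewrite inE xq orbT => /(_ isT xi); lia.
  + by rewrite newfind.
Qed.

Lemma inv_run ord q fin : bfs_run e ord q fin -> inv ord q -> inv fin [::].
Proof.
elim=> [o| o v q' new fin' Hn _ IH] Hi; first exact: Hi.
exact: IH (inv_step Hn Hi).
Qed.

End Inv.

Section Comb.
Variable T : finType.
Variable e : rel T.
Variables (s rest : seq T) (x0 : T).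
Hypothesis Hs : s = x0 :: rest.
Hypothesis Hu : uniq s.
Hypothesis Hcov : forall x, x \in s.
Hypothesis Hpar : forall x, 0 < index x s -> find (e x) s < index x s.
Hypothesis Hmon : forall x y, 0 < index x s -> index x s <= index y s ->
   find (e x) s <= find (e y) s.

Let pos x := index x s.

Lemma nonroot x : (x != x0) = (0 < pos x).
Proof. by rewrite /pos Hs /= eq_sym; case: (x0 == x). Qed.

Lemma hd v : head v s = x0. Proof. by rewrite Hs. Qed.

Definition par' x := if x == x0 then x0 else ftree_parent e s x.

Lemma pos_fp x : 0 < pos x -> pos (ftree_parent e s x) = find (e x) s.
Proof.
move=> xi; rewrite /pos /ftree_parent index_uniq //.
move: (Hpar xi) (index_mem x s); rewrite Hcov => h1 h2; exact: ltn_trans h1 h2.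
Qed.

Lemma par'_nr x : 0 < pos x -> par' x = ftree_parent e s x.
Proof. by rewrite -nonroot /par' => /negbTE ->. Qed.

Lemma pos_par' x : 0 < pos x -> pos (par' x) < pos x.
Proof. move=> xi; rewrite par'_nr // pos_fp //; exact: Hpar. Qed.

Lemma pos_par'_le x : pos (par' x) <= pos x.
Proof.
case: (posnP (pos x)) => [h|h]; last exact: ltnW (pos_par' h).
have xx : x == x0 by rewrite -[x == x0]negbK nonroot h.
by rewrite /par' xx (eqP xx).
Qed.

Lemma pos_iter t x : pos (iter t par' x) <= pos x.
Proof.
elim: t => // t IH; rewrite iterS; exact: leq_trans (pos_par'_le _) IH.
Qed.

Definition leafbelow u := [arg max_(y > u | fconnect par' y u) pos y].

Lemma leafbelowP u : 0 < pos u ->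
  [/\ fconnect par' (leafbelow u) u, pos u <= pos (leafbelow u)
    & leafbelow u \in ftree_leaves e s].
Proof.
move=> ui; rewrite /leafbelow; case: arg_maxnP => [|L HL Hmax]; first exact: connect0.
have uL : pos u <= pos L := Hmax u (connect0 _ _).
split => //; rewrite inE Hcov hd /= nonroot.
have -> /= : 0 < pos L by exact: leq_trans ui uL.
apply/negP => /existsP [w /andP [ws /andP [wn /eqP wp]]].
rewrite hd nonroot in wn.
have wL : par' w = L by rewrite par'_nr.
have : pos w <= pos L by apply: Hmax; apply: connect_trans HL; rewrite -wL; exact: fconnect1.
by move: (pos_par' wn); rewrite wL; lia.
Qed.

Variables a b : T.
Hypothesis eab : e b a.
Hypothesis ab : pos a < pos b.

Lemma key u : pos a < pos u <= pos b -> pos (par' u) <= pos a.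
Proof.
move=> /andP [h1 h2].
have ui : 0 < pos u by lia.
rewrite par'_nr // pos_fp //.
apply: leq_trans (Hmon ui h2) _.
rewrite leqNgt; apply/negP => /(before_find x0); rewrite nth_index ?Hcov //.
by rewrite eab.
Qed.

Lemma chain1 L u1 u2 :
  pos a < pos u1 <= pos b -> pos a < pos u2 <= pos b ->
  fconnect par' L u1 -> fconnect par' L u2 ->
  findex par' L u1 < findex par' L u2 -> False.
Proof.
move=> h1 h2 c1 c2 lt.
have e2 := iter_findex c2; have e1 := iter_findex c1.
set t1 := findex par' L u1 in e1 lt; set t2 := findex par' L u2 in e2 lt.
move: e2; rewrite (_ : t2 = (t2 - t1.+1) + t1.+1); last by lia.
rewrite iterD iterS e1 => e2.
have := pos_iter (t2 - t1.+1) (par' u1); rewrite e2.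
have := key h1; lia.
Qed.

Lemma chain L u1 u2 :
  pos a < pos u1 <= pos b -> pos a < pos u2 <= pos b ->
  fconnect par' L u1 -> fconnect par' L u2 -> u1 = u2.
Proof.
move=> h1 h2 c1 c2.
case: (ltngtP (findex par' L u1) (findex par' L u2)) => h.
- by case: (chain1 h1 h2 c1 c2 h).
- by case: (chain1 h2 h1 c2 c1 h).
- by rewrite -(iter_findex c1) -(iter_findex c2) h.
Qed.

Lemma main_bound : pos b - pos a <= #|ftree_leaves e s|.
Proof.
have bs : pos b < size s by rewrite /pos index_mem.
pose u (m : 'I_(pos b - pos a)) := nth x0 s (pos a + 1 + m).
have posu m : pos (u m) = pos a + 1 + m.
  by rewrite /pos /u index_uniq //; move: bs (ltn_ord m); rewrite /pos; set n := size s; move: n => n; lia.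
have rng m : pos a < pos (u m) <= pos b by rewrite posu; move: (ltn_ord m); lia.
have ui m : 0 < pos (u m) by rewrite posu; lia.
have inj : injective (fun m => leafbelow (u m)).
  move=> m1 m2 /= heq; apply: val_inj => /=.
  have [c1 _ _] := leafbelowP (ui m1); have [c2 _ _] := leafbelowP (ui m2).
  rewrite heq in c1.
  have := chain (rng m1) (rng m2) c1 c2 => /(congr1 pos); rewrite !posu; lia.
rewrite -{1}(card_ord (pos b - pos a)) -(card_imset _ inj).
apply: subset_leq_card; apply/subsetP => y /imsetP [m _ ->].
by have [_ _ ?] := leafbelowP (ui m).
Qed.

End Comb.

Theorem theorem3p3 (T : finType) (e : rel T) (s : seq T) (k : nat) :
  simple_graph e -> connected_graph e ->
  bfs_ordering e s ->
  #|ftree_leaves e s| <= k ->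
  bandwidth e s <= k.
Proof.
move=> [esym eirr] conn [r Hrun] Hk.
have Hinit : inv e [:: r] [:: r].
  exists [::]; split => //; split => //.
  - by move=> x; rewrite inE => /eqP -> /=; rewrite eqxx.
  - by move=> x y; rewrite inE => /eqP -> /=; rewrite eqxx.
  - by move=> x; rewrite inE => /eqP -> /=; rewrite eqxx.
have [P [Hord Hu Hsz [Hcl Hpar Hmon _]]] := inv_run esym Hrun Hinit.
rewrite cats0 in Hord; rewrite -Hord in Hcl.
case Hs: s Hsz => [|x0 rest] // _; rewrite -Hs.
have cl : closed e s.
  rewrite /closed_mem => x y exy /=; apply/idP/idP => [xs|ys]; first exact: Hcl x y xs exy.
  have eyx : e y x by rewrite esym.
  exact: Hcl y x ys eyx.
have Hcov x : x \in s.
  by rewrite -(closed_connect cl (conn x0 x)) Hs inE eqxx.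
have Hpar' x : 0 < index x s -> find (e x) s < index x s.
  exact: Hpar x (Hcov x).
have Hmon' x y : 0 < index x s -> index x s <= index y s -> find (e x) s <= find (e y) s.
  exact: Hmon x y (Hcov x) (Hcov y).
apply/bigmax_leqP => [[a b]] /= eab.
case: (ltngtP (index a s) (index b s)) => h.
- have eba : e b a by rewrite esym.
  have := main_bound Hs Hu Hcov Hpar' Hmon' eba h; lia.
- have := main_bound Hs Hu Hcov Hpar' Hmon' eab h; lia.
- rewrite h subnn; lia.
Qed.
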